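(* Let $\mathcal{G}=\langle S,A,T,s_0,F\rangle$ be a two-player turn-based deterministic reachability game, let $Y\subseteq\mathrm{Win}_2(\mathcal{G},F)\setminus F$ and let $s\in\mathrm{Win}_2(\mathcal{G},F)\setminus F$. Then $\mathrm{DSWin}_1(\emptyset,Y)\cup\mathrm{DSWin}_1(\emptyset,\{s\})\subseteq\mathrm{DSWin}_1(\emptyset,Y\cup\{s\})$.
   Context: A two-player turn-based deterministic reachability game is a tuple $\mathcal{G}=\langle S,A,T,s_0,F\rangle$: $S$ finite, partitioned into P1 states $S_1$ and P2 states $S_2$; $A=A_1\cup A_2$ (P1 and P2 actions); $T:(S_1\times A_1)\cup(S_2\times A_2)\to S$ deterministic, possibly partial ($a$ enabled at $s$ iff $T(s,a)$ defined; every state has an enabled action); $s_0$ initial; $F\subseteq S$ a set of sink states (P2's goal). For a target $R\subseteq S$: $Z_0=R$, $Z_{k+1}=Z_k\cup\{s\in S_1:T(s,a)\in Z_k\ \forall\text{ enabled }a\}\cup\{s\in S_2:T(s,a)\in Z_k\text{ for some enabled }a\}$; $\mathrm{Win}_2(\mathcal{G},R)=\bigcup_kZ_k$; $\mathrm{rank}_{\mathcal{G},R}(s)=\min\{k:s\in Z_k\}$ ($\infty$ if none). For disjoint $X,Y\subseteq\mathrm{Win}_2(\mathcal{G},F)\setminus F$ (traps $X$, fake targets $Y$): the true game $\mathcal{G}^1_{X,Y}$ has states $S$, transitions $T_{X,Y}(q,a)=T(q,a)$ if $q\notin X\cup Y$ and $T_{X,Y}(q,a)=q$ if $q\in X\cup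 Y$; P2's perceptual game $\mathcal{G}^2_{X,Y}$ has transitions $T$ and goal $F\cup Y$, with $\mathrm{rank}_{\mathcal{G}^2_{X,Y}}:=\mathrm{rank}_{\mathcal{G},F\cup Y}$. Subjectively rationalizable actions: for $q\in S_2\cap\mathrm{Win}_2(\mathcal{G},F)\setminus(F\cup Y)$, $\mathsf{SRActs}_{X,Y}(q)=\{a\text{ enabled}:\mathrm{rank}_{\mathcal{G}^2_{X,Y}}(T(q,a))<\mathrm{rank}_{\mathcal{G}^2_{X,Y}}(q)\}$; at every other state, all enabled actions. A memoryless deterministic strategy of either player is subjectively rationalizable if it picks an action in $\mathsf{SRActs}_{X,Y}(q)$ at each of that player's states $q$. A memoryless deterministic P1 strategy $\pi_1$ is stealthy deceptive sure winning at $s$ if it is subjectively rationalizable and, for every subjectively rationalizable memoryless deterministic P2 strategy $\pi_2$, every path from $s$ generated by $(\pi_1,\pi_2)$ in the true game $\mathcal{G}^1_{X,Y}$ visits $X\cup Y$ within finitely many steps. $\mathrm{DSWin}_1(X,Y)$ is the set of states at which P1 has such a strategy. *)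

(* Defs.v *)
From mathcomp Require Import all_boot.
From Stdlib Require Import ClassicalEpsilon.
Set Implicit Arguments. Unset Strict Implicit. Unset Printing Implicit Defensive.

Record game := Game {
  st : finType;
  act : finType;
  isP1 : pred st;                   (* S1 ; S2 is its complement *)
  isA1 : pred act;                  (* A1 ; A2 is its complement *)
  trans : st -> act -> option st;
  init : st;
  goal : {set st}
}.

Arguments isP1 : clear implicits.
Arguments isA1 : clear implicits.
Arguments trans : clear implicits.
Arguments init : clear implicits.
Arguments goal : clear implicits.

Section Game.
Variable G : game.
Local Notation S := (st G).
Local Notation A := (act G).
Local Notation T := (trans G).

Definition enabled (s : S) (a : A) : bool := T s a != None.

Definition wf_game : Prop :=
  (forall s a, enabled s a -> isP1 G s = isA1 G a) /\
  (forall s, exists a, enabled s a) /\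
  (forall f a t, f \in goal G -> T f a = Some t -> t = f).

Definition oin (o : option S) (B : {set S}) : bool :=
  if o is Some t then t \in B else false.

Fixpoint Z (R : {set S}) (k : nat) : {set S} :=
  match k with
  | 0 => R
  | k'.+1 =>
    Z R k' :|:
    [set s | isP1 G s && [forall a, enabled s a ==> oin (T s a) (Z R k')]] :|:
    [set s | ~~ isP1 G s && [exists a, oin (T s a) (Z R k')]]
  end.

Definition Win2 (R : {set S}) (s : S) : Prop := exists k, s \in Z R k.

(* rank_{G,R}(s) = min {k | s \in Z_k}, None standing for infinity. *)
Definition rank (R : {set S}) (s : S) : option nat :=
  match excluded_middle_informative (exists k, s \in Z R k) with
  | left ex => Some (ex_minn ex)
  | right _ => None
  end.

Definition rank_lt (o1 o2 : option nat) : bool :=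
  match o1, o2 with
  | Some m, Some n => m < n
  | Some _, None => true
  | None, _ => false
  end.

(* Subjectively rationalizable actions SRActs_{X,Y}(q) (depends only on Y). *)
Definition SRAct (Y : {set S}) (q : S) (a : A) : Prop :=
  enabled q a /\
  ((~~ isP1 G q /\ Win2 (goal G) q /\ q \notin goal G :|: Y) ->
   exists t, T q a = Some t /\
     rank_lt (rank (goal G :|: Y) t) (rank (goal G :|: Y) q)).

(* memoryless deterministic strategies: functions S -> A *)
Definition SR1 (Y : {set S}) (pi1 : S -> A) : Prop :=
  forall q, isP1 G q -> SRAct Y q (pi1 q).
Definition SR2 (Y : {set S}) (pi2 : S -> A) : Prop :=
  forall q, ~~ isP1 G q -> SRAct Y q (pi2 q).

(* rho is a path from s generated by (pi1, pi2) in the true game G^1_{X,Y} *)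
Definition true_path (X Y : {set S}) (pi1 pi2 : S -> A) (s : S)
    (rho : nat -> S) : Prop :=
  rho 0 = s /\
  forall i, let q := rho i in
    if q \in X :|: Y then rho i.+1 = q
    else T q (if isP1 G q then pi1 q else pi2 q) = Some (rho i.+1).

Definition stealthy_DSW (X Y : {set S}) (pi1 : S -> A) (s : S) : Prop :=
  SR1 Y pi1 /\
  forall pi2, SR2 Y pi2 ->
    forall rho, true_path X Y pi1 pi2 s rho ->
      exists i, rho i \in X :|: Y.

Definition DSWin1 (X Y : {set S}) (s : S) : Prop :=
  exists pi1, stealthy_DSW X Y pi1 s.

End Game.

(* Main.v *)
Require Import Defs.
From mathcomp Require Import all_boot.
From Stdlib Require Import Classical ClassicalEpsilon.
Set Implicit Arguments. Unset Strict Implicit. Unset Printing Implicit Defensive.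

Section Proofs.
Variable G : game.
Local Notation S := (st G).
Local Notation A := (act G).
Local Notation T := (trans G).

Lemma Z_succ (R : {set S}) k x : x \in Z R k -> x \in Z R k.+1.
Proof. by move=> H; rewrite /= !in_setU H. Qed.

Lemma Z_mono (R : {set S}) m n x : m <= n -> x \in Z R m -> x \in Z R n.
Proof.
elim: n => [|n IH]; first by rewrite leqn0 => /eqP->.
rewrite leq_eqVlt => /orP[/eqP->//|]; rewrite ltnS => /IH H /H; apply: Z_succ.
Qed.

Lemma oin_mono (o : option S) (B B' : {set S}) :
  (forall t, t \in B -> t \in B') -> oin o B -> oin o B'.
Proof. by case: o => //= t H /H. Qed.

Lemma oin_enabled x a (B : {set S}) : oin (T x a) B -> enabled x a.
Proof. by rewrite /enabled; case: (T x a). Qed.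

Lemma Z_monoR (R R' : {set S}) k : R \subset R' ->
  forall x, x \in Z R k -> x \in Z R' k.
Proof.
move=> sR; elim: k => [|k IH] x; first by move/(subsetP sR).
rewrite /= !in_setU !inE => /orP[/orP[H|/andP[p /forallP H]]|/andP[p /existsP[a H]]].
- by rewrite IH.
- apply/orP; left; apply/orP; right; rewrite p /=; apply/forallP => a.
  apply/implyP => ea; exact: oin_mono IH (implyP (H a) ea).
- apply/orP; right; rewrite p /=; apply/existsP; exists a; exact: oin_mono IH H.
Qed.

Lemma rank_some (R : {set S}) x k : rank R x = Some k ->
  x \in Z R k /\ forall m, x \in Z R m -> k <= m.
Proof.
rewrite /rank; case: excluded_middle_informative => // ex [<-].
by case: ex_minnP.
Qed.

Lemma rank_none (R : {set S}) x : rank R x = None -> forall k, x \notin Z R k.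
Proof.
rewrite /rank; case: excluded_middle_informative => // nex _ k.
by apply/negP => H; apply: nex; exists k.
Qed.

Lemma rank_of (R : {set S}) x k : x \in Z R k -> exists m, rank R x = Some m /\ m <= k.
Proof.
move=> H; case E: (rank R x) => [m|]; last by rewrite (negbTE (rank_none E k)) in H.
exists m; split => //; exact: (rank_some E).2.
Qed.

Lemma rank_ext (R R' : {set S}) x :
  (forall k, (x \in Z R k) = (x \in Z R' k)) -> rank R x = rank R' x.
Proof.
move=> H; case E: (rank R x) => [m|].
- have [Hm Hmin] := rank_some E.
  have [m' [E' _]] : exists m', rank R' x = Some m' /\ m' <= m.
    by apply: rank_of; rewrite -H.
  have [Hm' Hmin'] := rank_some E'.
  rewrite E'; congr Some; apply/eqP; rewrite eqn_leq.
  have -> : m <= m' by apply: Hmin; rewrite H.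
  by apply: Hmin'; rewrite -H.
- case E': (rank R' x) => [m'|] //.
  have [Hm' _] := rank_some E'.
  by move: (rank_none E m'); rewrite H Hm'.
Qed.

Lemma Z_win (Y2 : {set S}) : (forall y, y \in Y2 -> Win2 (goal G) y) ->
  forall k x, x \in Z (goal G :|: Y2) k -> Win2 (goal G) x.
Proof.
move=> HY; elim => [|k IH] x.
  by rewrite /= in_setU => /orP[H|/HY//]; exists 0.
rewrite /= !in_setU !inE => /orP[/orP[/IH//|/andP[p /forallP H]]|/andP[p /existsP[a H]]].
- pose f a := if excluded_middle_informative
                 (exists m, oin (T x a) (Z (goal G) m)) is left e
              then ex_minn e else 0.
  have Hf : forall a, enabled x a -> oin (T x a) (Z (goal G) (f a)).
    move=> a ea.
    have: exists m, oin (T x a) (Z (goal G) m).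
      move: (implyP (H a) ea); case: (T x a) => //= t /IH [m Hm]; by exists m.
    move=> e; rewrite /f; case: excluded_middle_informative => [e'|//].
    by case: ex_minnP.
  exists (\max_(a : A) f a).+1; rewrite /= !in_setU; apply/orP; left; apply/orP; right.
  rewrite inE p /=; apply/forallP => a; apply/implyP => ea.
  apply: oin_mono (Hf a ea) => t; apply: Z_mono; exact: leq_bigmax.
- move: H; case E: (T x a) => [t|] //= /IH [m Hm].
  exists m.+1; rewrite /= !in_setU; apply/orP; right.
  rewrite inE p /=; apply/existsP; exists a; by rewrite E.
Qed.

Definition Pl (Y1 Y2 : {set S}) x a n :=
  (x \in Z (goal G :|: Y2) n.+1) && (x \notin Z (goal G :|: Y2) n) &&
  (x \notin Z (goal G :|: Y1) n.+1) && oin (T x a) (Z (goal G :|: Y2) n) &&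
  ~~ oin (T x a) (Z (goal G :|: Y1) n).

Definition pi1' (Y1 Y2 : {set S}) (pi1 : S -> A) x :=
  match excluded_middle_informative (exists a n, Pl Y1 Y2 x a n) with
  | left e => proj1_sig (constructive_indefinite_description _ e)
  | right _ => pi1 x end.

Lemma pi1'P Y1 Y2 pi1 x : (exists a n, Pl Y1 Y2 x a n) ->
  exists n, Pl Y1 Y2 x (pi1' Y1 Y2 pi1 x) n.
Proof.
rewrite /pi1'; case: excluded_middle_informative => // e _.
exact: proj2_sig (constructive_indefinite_description _ e).
Qed.

Lemma pi1'N Y1 Y2 pi1 x : ~ (exists a n, Pl Y1 Y2 x a n) ->
  pi1' Y1 Y2 pi1 x = pi1 x.
Proof. by rewrite /pi1'; case: excluded_middle_informative. Qed.

Definition pi2' (Y1 : {set S}) (pi2 : S -> A) x :=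
  match excluded_middle_informative (SRAct Y1 x (pi2 x)) with
  | left _ => pi2 x
  | right _ =>
    match excluded_middle_informative (exists a, SRAct Y1 x a) with
    | left e => proj1_sig (constructive_indefinite_description _ e)
    | right _ => pi2 x end end.

Lemma pi2'P Y1 pi2 x : (exists a, SRAct Y1 x a) -> SRAct Y1 x (pi2' Y1 pi2 x).
Proof.
rewrite /pi2'; case: excluded_middle_informative => // _.
case: excluded_middle_informative => // e _.
exact: proj2_sig (constructive_indefinite_description _ e).
Qed.

Lemma pi2'E Y1 pi2 x : SRAct Y1 x (pi2 x) -> pi2' Y1 pi2 x = pi2 x.
Proof. by rewrite /pi2'; case: excluded_middle_informative. Qed.

Lemma SR_exists (Hwf : wf_game G) (Y1 : {set S}) x :
  ~~ isP1 G x -> exists a, SRAct Y1 x a.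
Proof.
move=> np.
case: (classic (Win2 (goal G) x /\ x \notin goal G :|: Y1)) => [[[k Hk] Hn]|Hno].
- have Hk' : x \in Z (goal G :|: Y1) k := Z_monoR (subsetUl _ _) Hk.
  have [r [Er _]] := rank_of Hk'. have [Hr Hmin] := rank_some Er.
  case: r Er Hr Hmin => [|r] Er Hr Hmin.
    by rewrite /= in Hr; rewrite Hr in Hn.
  move: Hr; rewrite /= !in_setU !inE (negbTE np) /= orbF.
  case/orP => [Hr|/existsP [a Ha]].
    by move: (Hmin r Hr); rewrite ltnn.
  exists a; split; first exact: oin_enabled Ha.
  move=> _; move: Ha; case E: (T x a) => [t|] //= Ht.
  exists t; split => //.
  have [m [Em lem]] := rank_of Ht.
  by rewrite Er Em /=.
- have [a ea] := Hwf.2.1 x.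
  exists a; split => // [[_ [H1 H2]]]; exfalso; exact: Hno.
Qed.

Lemma mono_DSW (Hwf : wf_game G) (Y1 Y2 : {set S}) : Y1 \subset Y2 ->
  (forall y, y \in Y2 -> Win2 (goal G) y) ->
  forall q, DSWin1 set0 Y1 q -> DSWin1 set0 Y2 q.
Proof.
move=> sY HY q [pi1 [SR1pi HW]].
exists (pi1' Y1 Y2 pi1); split.
  move=> x px; split; last by move=> [/negP].
  case: (classic (exists a n, Pl Y1 Y2 x a n)) => [e|ne].
    have [n] := pi1'P pi1 e.
    by rewrite /Pl => /andP[/andP[_ /oin_enabled]].
  by rewrite pi1'N //; exact: (SR1pi x px).1.
move=> pi2 SR2pi rho [H0 Hstep].
case: (classic (exists i, rho i \in Y2)) => [[i Hi]|Hno].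
  by exists i; rewrite in_setU in_set0.
case: (classic (exists i n, rho i \in Z (goal G :|: Y2) n /\
                            rho i \notin Z (goal G :|: Y1) n)) => [[i [n [H1 H2]]]|HB].
- exfalso; apply: Hno.
  elim: n i H1 H2 => [|n IH] i H1 H2.
    rewrite /= !in_setU in H1 H2; case/orP: H1 => H; last by exists i.
    by rewrite H in H2.
  case: (boolP (rho i \in Y2)) => [Hy|Hy]; first by exists i.
  have H2' : rho i \notin Z (goal G :|: Y1) n by apply: contra H2; apply: Z_succ.
  case: (boolP (rho i \in Z (goal G :|: Y2) n)) => [H3|H3]; first exact: IH H3 H2'.
  move: (Hstep i) => /=; rewrite in_setU in_set0 (negbTE Hy) /=.
  case: (boolP (isP1 G (rho i))) => p Hs.
  + have H1c := H1.
    move: H1c; rewrite /= !in_setU (negbTE H3) /= !inE p /= orbF => /forallP Hall.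
    have : ~~ [forall a, enabled (rho i) a ==> oin (T (rho i) a) (Z (goal G :|: Y1) n)].
      by apply: contra H2 => Hf; rewrite /= !in_setU !inE p Hf /= orbT.
    rewrite negb_forall => /existsP [a]; rewrite negb_imply => /andP[ea Hna].
    have e : exists a n, Pl Y1 Y2 (rho i) a n.
      by exists a, n; rewrite /Pl H1 H3 H2 (implyP (Hall a) ea) Hna.
    have [n' Hn'] := pi1'P pi1 e.
    move: Hn'; rewrite /Pl Hs /= => /andP[/andP[/andP[/andP[Hn1 Hn2] _] Hn4] Hn5].
    have En : n' = n.
      case: (ltngtP n n') => // Hlt.
        by move: Hn2; rewrite (Z_mono Hlt H1).
      by move: H3; rewrite (Z_mono Hlt Hn1).
    subst n'; exact: IH Hn4 Hn5.
  + have Hw := Z_win HY H1.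
    have Hn0 : rho i \notin goal G :|: Y2.
      by apply: contra H3 => H; apply: (Z_mono (m := 0)).
    have [_ /(_ (conj p (conj Hw Hn0))) [t [Ht Hlt]]] := SR2pi (rho i) p.
    rewrite Hs in Ht; case: Ht => Ht; subst t.
    have [m [Em lem]] := rank_of H1.
    have Em' : m = n.+1.
      have [Hm _] := rank_some Em.
      apply/eqP; rewrite eqn_leq lem /=; rewrite ltnNge; apply/negP => Hle.
      by move: H3; rewrite (Z_mono Hle Hm).
    subst m; rewrite Em in Hlt.
    case Et: (rank (goal G :|: Y2) (rho i.+1)) Hlt => [m'|] //= Hm'.
    have [Hm'' _] := rank_some Et.
    apply: (IH i.+1); first by apply: Z_mono Hm''.
    apply/negP => Hc; move: H2; rewrite /= !in_setU !inE (negbTE p) /= => /negP; apply; apply/orP; right; apply/existsP; exists (pi2 (rho i)); by rewrite Hs.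
- have HB' : forall i n, rho i \in Z (goal G :|: Y2) n -> rho i \in Z (goal G :|: Y1) n.
    move=> i n H; case: (boolP (rho i \in Z (goal G :|: Y1) n)) => // H'.
    by exfalso; apply: HB; exists i, n.
  have Hrank : forall i, rank (goal G :|: Y1) (rho i) = rank (goal G :|: Y2) (rho i).
    move=> i; apply: rank_ext => k; apply/idP/idP; last exact: HB'.
    by apply: Z_monoR; apply: setUS.
  have [j Hj] : exists j, rho j \in set0 :|: Y1.
    apply: (HW (pi2' Y1 pi2)).
      by move=> x px; apply: pi2'P; apply: SR_exists.
    split => // i.
    have Hy : rho i \notin Y2 by apply/negP => H; apply: Hno; exists i.
    have Hy1 : rho i \notin Y1 by apply: contra Hy; apply: (subsetP sY).
    move: (Hstep i) => /=; rewrite !in_setU !in_set0 /= (negbTE Hy) (negbTE Hy1).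
    case: (boolP (isP1 G (rho i))) => p Hs.
      rewrite -Hs pi1'N //; move=> [a [n]]; rewrite /Pl => /andP[/andP[/andP[/andP[Hn1 _] Hn3] _] _].
      by move: Hn3; rewrite (HB' _ _ Hn1).
    rewrite pi2'E //; split; first exact: (SR2pi _ p).1.
    move=> [np [Hw Hn]].
    have Hn2 : rho i \notin goal G :|: Y2.
      by move: Hn; rewrite !in_setU (negbTE Hy) (negbTE Hy1).
    have [_ /(_ (conj np (conj Hw Hn2))) [t [Ht Hlt]]] := SR2pi (rho i) p.
    rewrite Hs in Ht; case: Ht => Ht; subst t.
    exists (rho i.+1); split => //.
    by rewrite !Hrank.
  exists j; move: Hj; rewrite !in_setU !in_set0 /=; apply: (subsetP sY).
Qed.

End Proofs.

Theorem corollary2 (G : game) (Hwf : wf_game G)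
  (Y : {set st G}) (s : st G)
  (HY : forall y, y \in Y -> Win2 (goal G) y /\ y \notin goal G)
  (Hs : Win2 (goal G) s /\ s \notin goal G) :
  forall q, DSWin1 set0 Y q \/ DSWin1 set0 [set s] q ->
            DSWin1 set0 (Y :|: [set s]) q.
Proof.
have HY2 : forall y, y \in Y :|: [set s] -> Win2 (goal G) y.
  by move=> y; rewrite in_setU in_set1 => /orP[/HY[]|/eqP->] //; exact: Hs.1.
move=> q [H|H].
  exact: (mono_DSW Hwf (subsetUl _ _) HY2 H).
exact: (mono_DSW Hwf (subsetUr _ _) HY2 H).
Qed.
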